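(* Let $\Theta$ be a parameter space. For a set function $C:[0,1]\to2^{\Theta}$, $C\in\mathrm{ECI}(\Theta)$ if and only if $C$ is nonincreasing and continuous from above (i.e. $C(\alpha)=\bigcup_{\beta>\alpha}C(\beta)$ for every $\alpha\in[0,1)$).
   Context: The underlying probability space is assumed to carry a random variable $U$ that is standard uniform under every parameter $\theta\in\Theta$. An e-value family for $\Theta$ is $(E(\theta))_{\theta\in\Theta}$ with $E(\theta)\ge0$ and $\mathbb{E}_\theta[E(\theta)]\le1$ for every $\theta$. $\mathrm{ECI}(\Theta)$ is the set of all $C:[0,1]\to2^\Theta$ that are a possible realization of an e-CI, i.e. for which there exists an e-value family $E$ and a possible realization of it (under some true parameter $\theta^*\in\Theta$) such that $C(\alpha)=\{\theta\in\Theta:E(\theta)<1/\alpha\}$ for all $\alpha\in[0,1)$, with the convention $1/0=\infty$. *)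

(* Defs.v *)
From HB Require Import structures.
From mathcomp Require Import all_boot all_order all_algebra.
From mathcomp Require Import all_classical all_reals all_analysis.
From mathcomp Require Import measurable_realfun lebesgue_integral.
Set Implicit Arguments. Unset Strict Implicit. Unset Printing Implicit Defensive.
Import Order.TTheory GRing.Theory Num.Theory.
Local Open Scope classical_set_scope.
Local Open Scope ring_scope.

Definition einv (R : realType) (a : R) : \bar R :=
  if a == 0 then +oo%E else (a^-1)%:E.

Definition std_uniform_under_all d (Omega : measurableType d) (R : realType)
  (Theta : Type) (P : Theta -> probability Omega R) (U : Omega -> R) : Prop :=
  measurable_fun setT U /\
  forall (th : Theta) (x : R), 0 <= x <= 1 ->
    P th (U @^-1` `]-oo, x]) = x%:E.

Definition e_value_family d (Omega : measurableType d) (R : realType)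
  (Theta : Type) (P : Theta -> probability Omega R)
  (E : Theta -> Omega -> \bar R) : Prop :=
  forall th : Theta,
    [/\ measurable_fun [set: Omega] (E th : Omega -> \bar R),
        (forall w, (0 <= E th w)%E) &
        (\int[P th]_w E th w <= 1)%E].

(* C : [0,1] -> 2^Theta (represented as R -> set Theta; only alpha in [0,1]
   matters) is a possible realization of an e-CI. *)
Definition ECI d (Omega : measurableType d) (R : realType)
  (Theta : Type) (P : Theta -> probability Omega R) (C : R -> set Theta) : Prop :=
  exists E : Theta -> Omega -> \bar R, e_value_family P E /\
  exists (thstar : Theta) (w : Omega),
    forall alpha : R, 0 <= alpha <= 1 ->
      C alpha = [set th | (E th w < einv alpha)%E].

Definition set_nonincreasing (R : realType) (Theta : Type) (C : R -> set Theta) :=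
  forall a b : R, 0 <= a -> a <= b -> b <= 1 -> C b `<=` C a.

Definition cont_from_above (R : realType) (Theta : Type) (C : R -> set Theta) :=
  forall a : R, 0 <= a -> a < 1 ->
    C a = \bigcup_(b in [set b : R | a < b /\ b <= 1]) C b.

(* Main.v *)
Require Import Defs.
From HB Require Import structures.
From mathcomp Require Import all_boot all_order all_algebra.
From mathcomp Require Import all_classical all_reals all_analysis.
From mathcomp Require Import measurable_realfun lebesgue_integral.
From mathcomp Require Import lra.
Set Implicit Arguments. Unset Strict Implicit. Unset Printing Implicit Defensive.
Import Order.TTheory GRing.Theory Num.Theory.
Local Open Scope classical_set_scope.
Local Open Scope ring_scope.

Lemma einv_anti (R : realType) (a b : R) : 0 <= a -> a <= b -> (einv b <= einv a)%E.
Proof.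
move=> a0 ab; rewrite /einv; have [a00|an0] := eqVneq a 0; first by rewrite leey.
have ap : 0 < a by rewrite lt_def an0.
have bp : 0 < b by apply: lt_le_trans ab.
rewrite gt_eqF // lee_fin lef_pV2 ?posrE //.
Qed.

Lemma einv_gt0 (R : realType) (a : R) : 0 <= a -> (0 < einv a)%E.
Proof.
move=> a0; rewrite /einv; have [a00|an0] := eqVneq a 0; first by rewrite ltry.
by rewrite lte_fin invr_gt0 lt_def an0.
Qed.

Lemma find_b (R : realType) (a r : R) : 0 <= a -> a < 1 -> 0 <= r ->
  (r%:E < einv a)%E -> exists b, (a < b /\ b <= 1) /\ (r%:E < einv b)%E.
Proof.
move=> a0 a1 r0 hr.
have ar : a * r < 1.
  move: hr; rewrite /einv; have [a00|an0] := eqVneq a 0; first by rewrite a00 mul0r.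
  have ap : 0 < a by rewrite lt_def an0.
  by rewrite lte_fin => h; rewrite -(mulfV (lt0r_neq0 ap)) ltr_pM2l.
pose b := Num.min 1 (a + (1 - a * r) / (r + 1)).
have r1 : 0 < r + 1 by lra.
have q0 : 0 < (1 - a * r) / (r + 1) by apply: divr_gt0; lra.
have ab : a < b by rewrite /b lt_min a1 /=; lra.
have b1 : b <= 1 by rewrite /b ge_min lexx.
have bp : 0 < b by apply: le_lt_trans ab.
have br : b * r < 1.
  have : b <= a + (1 - a * r) / (r + 1) by rewrite /b ge_min lexx orbT.
  move=> hb; apply: (le_lt_trans (ler_wpM2r r0 hb)).
  rewrite mulrDl.
  have : (1 - a * r) / (r + 1) * r < 1 - a * r.
    rewrite mulrAC ltr_pdivrMr //; nra.
  lra.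
exists b; split => //.
rewrite /einv gt_eqF // lte_fin.
by rewrite -(ltr_pM2l bp) mulfV ?gt_eqF.
Qed.

Lemma null_pt (R : realType) (d : measure_display) (Omega : measurableType d)
  (Theta : Type) (P : Theta -> probability Omega R) (U : Omega -> R)
  (HU : std_uniform_under_all P U) (th : Theta) (u0 : R) :
  measurable (U @^-1` [set u0]) /\ P th (U @^-1` [set u0]) = 0%E.
Proof.
case: HU => mU HF.
have mpre : forall A, measurable A -> measurable (U @^-1` A).
  by move=> A mA; rewrite -[U @^-1` A]setTI; apply: mU.
have mN : measurable (U @^-1` [set u0]) by apply: mpre.
split => //.
have HFc : forall x : R, 0 <= x <= 1 ->
  (P th : {content set Omega -> \bar R}) (U @^-1` `]-oo, x]) = x%:E := HF th.
have HF' : forall x : R, 0 <= x <= 1 -> P th (U @^-1` `]-oo, x]) = x%:E := HF th.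
have mI : forall x : R, measurable (U @^-1` `]-oo, x]).
  by move=> x; apply: mpre; apply: measurable_itv.
have HN0 : forall A, measurable A -> U @^-1` [set u0] `<=` A -> P th A = 0%E ->
    P th (U @^-1` [set u0]) = 0%E.
  move=> A mA NA PA; apply/eqP; rewrite eq_le measure_ge0 andbT -PA.
  by apply: le_measure => //; rewrite inE.
have [u0n|u0p] := leP u0 0.
  apply: (HN0 _ (mI 0)); last by rewrite HF // lexx ler01.
  by move=> x /= ->; rewrite in_itv /=.
have [u01|u01] := ltP 1 u0.
  apply: (HN0 (~` (U @^-1` `]-oo, 1]))).
  - exact: measurableC.
  - by move=> x /= -> ; rewrite in_itv /= leNgt u01.
  - by rewrite probability_setC // HF ?ler01 ?lexx // subee.
apply/eqP; rewrite eq_le measure_ge0 andbT.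
apply/lee_addgt0Pr => e e0; rewrite add0e.
pose a := Num.max 0 (u0 - e).
have a0 : 0 <= a by rewrite /a le_max lexx.
have au : a <= u0 by rewrite /a ge_max (ltW u0p) /=; lra.
have a1 : a <= 1 by apply: le_trans au u01.
have sub : U @^-1` [set u0] `<=` U @^-1` `]-oo, u0] `\` U @^-1` `]-oo, a].
  move=> x /= ->; split; first by rewrite /= in_itv /= lexx.
  rewrite /= in_itv /= => h.
  by move: h; rewrite /a le_max => /orP []; lra.
apply: (le_trans (le_measure _ _ _ sub)); rewrite ?inE //.
  by apply: measurableD.
rewrite measureD //; last by rewrite HFc ?(ltW u0p) ?u01 // ltry.
have -> : U @^-1` `]-oo, u0] `&` U @^-1` `]-oo, a] = U @^-1` `]-oo, a].
  apply/setIidr => x /=; rewrite !in_itv /= => h; apply: le_trans h au.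
rewrite !HFc ?a0 ?a1 ?(ltW u0p) ?u01 // -EFinB lee_fin.
rewrite /a; have [h|h] := leP 0 (u0 - e); lra.
Qed.

Theorem lemma1 (R : realType) (d : measure_display) (Omega : measurableType d)
  (Theta : Type) (P : Theta -> probability Omega R) (U : Omega -> R)
  (HU : std_uniform_under_all P U) (theta0 : Theta) (C : R -> set Theta) :
  ECI P C <-> (set_nonincreasing C /\ cont_from_above C).
Proof.
split.
- move=> [E [hE [ths [w H]]]].
  have hni : set_nonincreasing C.
    move=> a b a0 ab b1 th.
    have hb : 0 <= b <= 1 by rewrite (le_trans a0 ab) b1.
    have ha : 0 <= a <= 1 by rewrite a0 (le_trans ab b1).
    rewrite (H b hb) (H a ha) /= => hlt.
    exact: lt_le_trans hlt (einv_anti a0 ab).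
  split => // a a0 a1.
  have ha : 0 <= a <= 1 by rewrite a0 (ltW a1).
  apply/seteqP; split.
  + move=> th; rewrite (H a ha) /= => hlt.
    have [_ Hge _] := hE th.
    move: (Hge w) hlt; case hEw: (E th w) => [r| |] //.
    * rewrite lee_fin => r0 hlt.
      have [b [[ab b1] hb]] := find_b a0 a1 r0 hlt.
      exists b => //.
      have hb' : 0 <= b <= 1 by rewrite (le_trans a0 (ltW ab)) b1.
      by rewrite (H b hb') /= hEw.
    * by move=> _; rewrite ltNge leey.
  + move=> th [b [ab b1] hb].
    exact: (hni a b a0 (ltW ab) b1 th hb).
- move=> [hni hca].
  have [w _] : exists w : Omega, True.
    apply: contrapT => hn.
    have h : [set: Omega] = set0.
      by apply/seteqP; split => // x _; exfalso; apply: hn; exists x.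
    have := probability_setT (P theta0); rewrite h measure0 => h0.
    by have := @lte01 R; rewrite -h0 ltxx.
  pose N := U @^-1` [set U w].
  pose S th := [set einv b | b in [set b | (0 <= b <= 1) /\ ~ C b th]].
  pose v th := Order.max 0%E (ereal_sup (S th)).
  pose E th (x : Omega) := (v th * (\1_N x)%:E)%E.
  have Ew : forall th, E th w = v th.
    by move=> th; rewrite /E indicE mem_set // mule1.
  exists E; split.
  + move=> th; have [mN PN] := null_pt HU th (U w).
    have mE : measurable_fun [set: Omega] (E th).
      apply: emeasurable_funM; first exact: measurable_cst.
      by apply/measurable_EFinP; exact: measurable_indic.
    split => //.
    * move=> x; apply: mule_ge0; first by rewrite le_max lexx.
      by rewrite lee_fin indicE ler0n.
    * rewrite (@ae_eq_integral _ _ _ _ _ (cst 0%E)) //.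
      - by rewrite integral0 lee01.
      exists N; split => // x /= hx; apply: contrapT => nN; apply: hx => _.
      by rewrite /E indicE memNset // mule0.
  + exists theta0, w => alpha ha.
    case/andP: ha => a0 a1.
    apply/seteqP; split.
    * move=> th hC /=; rewrite Ew /v gt_max einv_gt0 //=.
      have [a1'|a1'] := ltP alpha 1.
      - move: hC; rewrite (hca alpha a0 a1') => -[b [ab b1] hb].
        have bp : 0 < b by apply: le_lt_trans ab.
        apply: (@le_lt_trans _ _ (einv b)).
          apply: ge_ereal_sup => _ [be [/andP [be0 be1] nC] <-].
          apply: einv_anti; first exact: ltW.
          rewrite leNgt; apply/negP => bb; apply: nC.
          exact: (hni be b be0 (ltW bb) b1 th hb).
        rewrite /einv (gt_eqF bp).
        have [a00|an0] := eqVneq alpha 0; first by rewrite ltry.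
        have ap : 0 < alpha by rewrite lt_def an0.
        by rewrite lte_fin ltf_pV2 ?posrE.
      - have a1e : alpha = 1 by apply/eqP; rewrite eq_le a1 a1'.
        apply: (@le_lt_trans _ _ 0%E); last exact: einv_gt0.
        apply: ge_ereal_sup => _ [be [/andP [be0 be1] nC] <-].
        exfalso; apply: nC; apply: (hni be alpha be0 _ a1 th hC).
        by rewrite a1e.
    * move=> th /=; rewrite Ew => hlt.
      apply: contrapT => nC.
      have : (einv alpha <= v th)%E.
        rewrite le_max; apply/orP; right.
        apply: ereal_sup_ubound; exists alpha => //.
        by split => //; rewrite a0 a1.
      by rewrite leNgt hlt.
Qed.
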